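(* Let $0<\delta<1/10$. Any one-way (Alice to Bob) communication protocol for the $\mathsf{Overwrite}$ problem that errs with probability at most $\delta$ over inputs drawn from $\mathcal{D}_{\mathsf{Overwrite}}$ has communication complexity $\Omega(n)$ with respect to $\mathcal{D}_{\mathsf{Overwrite}}$.
   Context: In $\mathsf{Overwrite}$, Alice gets $X^A\in\{0,1,*\}^n$ and Bob gets $X^B\in\{0,1\}^n$ and an index $i^*\in[n]$, with the promise that for every $i\ne i^*$ either $X^A_i=X^B_i$ or $X^A_i=*$. Alice sends one message to Bob, who must output $X^A_{i^*}$; if $X^A_{i^*}=*$ both outputs $0$ and $1$ are correct. The distribution $\mathcal{D}_{\mathsf{Overwrite}}$: choose $i^*$ uniformly from $[n]$ and $X^B$ uniformly from $\{0,1\}^n$; set $X^A_{i^*}$ to $*$ with probability $1/2$, to $0$ with probability $1/4$ and to $1$ with probability $1/4$; independently for each $i\ne i^*$, set $X^A_i=*$ with probability $1/2$ and $X^A_i=X^B_i$ with probability $1/2$. Communication complexity with respect to a distribution is the expected message length (in bits) on inputs drawn from it. *)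

(* Defs.v *)
From HB Require Import structures.
From mathcomp Require Import all_boot all_order all_algebra.
From mathcomp Require Import reals.
Set Implicit Arguments. Unset Strict Implicit. Unset Printing Implicit Defensive.
Import Order.TTheory GRing.Theory Num.Theory.
Local Open Scope ring_scope.

(* Alice's input X^A in {0,1,*}^n : None encodes '*', Some b encodes bit b. *)
Definition inA (n : nat) := {ffun 'I_n -> option bool}.
Definition inB (n : nat) := {ffun 'I_n -> bool}.

Definition D_overwrite (R : realType) (n : nat) (i : 'I_n) (xb : inB n) (xa : inA n) : R :=
  (n%:R)^-1 * ((2 ^ n)%N%:R)^-1 *
  (if xa i is Some _ then 1/4 else 1/2) *
  \prod_(j : 'I_n | j != i)
     (match xa j with None => 1/2 | Some b => if b == xb j then 1/2 else 0 end).

Definition ow_correct (n : nat) (i : 'I_n) (xa : inA n) (o : bool) : bool :=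
  if xa i is Some b then o == b else true.

(* A one-way protocol with public randomness r drawn from rho over a finite type Rnd:
   Alice sends the bit string alice r X^A, Bob outputs bob r msg X^B i*.  *)
Definition ow_error (R : realType) (n : nat) (Rnd : finType) (rho : Rnd -> R)
  (alice : Rnd -> inA n -> seq bool) (bob : Rnd -> seq bool -> inB n -> 'I_n -> bool) : R :=
  \sum_(r : Rnd) \sum_(i : 'I_n) \sum_(xb : inB n) \sum_(xa : inA n)
     rho r * D_overwrite R i xb xa *
     (if ow_correct i xa (bob r (alice r xa) xb i) then 0 else 1).

Definition ow_cost (R : realType) (n : nat) (Rnd : finType) (rho : Rnd -> R)
  (alice : Rnd -> inA n -> seq bool) : R :=
  \sum_(r : Rnd) \sum_(i : 'I_n) \sum_(xb : inB n) \sum_(xa : inA n)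
     rho r * D_overwrite R i xb xa * (size (alice r xa))%:R.

(* Main.v *)
Require Import Defs.
From HB Require Import structures.
From mathcomp Require Import all_boot all_order all_algebra.
From mathcomp Require Import reals.
From mathcomp Require Import exp.
From mathcomp Require Import lra ring.
Import Order.TTheory GRing.Theory Num.Theory.
Local Open Scope ring_scope.

Section Gen.
Variable R : realType.

Lemma sum_ffun_prod (I J : finType) (F : I -> J -> R) :
  \sum_(f : {ffun I -> J}) \prod_i F i (f i) = \prod_i \sum_j F i j.
Proof. by rewrite bigA_distr_bigA. Qed.

Lemma ln_le_sub1 (y : R) : 0 < y -> ln y <= y - 1.
Proof.
move=> y0; have h : -1 < y - 1 by lra.
have := le_ln1Dx h; rewrite (_ : 1 + (y - 1) = y) //; lra.
Qed.

Lemma gibbs (T : finType) (w q : T -> R) (N : R) :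
  (forall x, 0 <= w x) -> (forall x, 0 < q x) -> \sum_x w x = N -> 0 < N ->
  \sum_x w x * q x <= 1 ->
  N * ln N <= \sum_x w x * (- ln (q x)).
Proof.
move=> w0 q0 sw N0 sq.
have key : forall x, w x * ln N + w x * ln (q x) <= N * (w x * q x) - w x.
  move=> x; rewrite -mulrDr -lnM ?posrE //.
  have h := @ln_le_sub1 (N * q x) (mulr_gt0 N0 (q0 x)).
  have := ler_wpM2l (w0 x) h; rewrite mulrBr mulr1; lra.
have : \sum_x (w x * ln N + w x * ln (q x)) <= \sum_x (N * (w x * q x) - w x).
  by apply: ler_sum => x _; exact: key.
rewrite !big_split /= -!mulr_suml -mulr_sumr sw.
rewrite sumrN sw => h.
have h2 : N * (\sum_i w i * q i) <= N by rewrite -[X in _ <= X]mulr1 ler_pM2l.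
rewrite (eq_bigr (fun i => - (w i * ln (q i)))); last by move=> i _; rewrite mulrN.
rewrite sumrN.
move: h h2; set a := N * ln N; set b := N * _; set c := \sum_i _ ; lra.
Qed.

Definition hd0 (m : seq bool) := if m is false :: _ then true else false.
Definition hd1 (m : seq bool) := if m is true :: _ then true else false.
Let f (m : seq bool) : R := (4%:R^-1 : R) ^+ size m.

Lemma kraft_nil (s : seq (seq bool)) : uniq s ->
  \sum_(m <- s | m == [::]) f m <= 1.
Proof.
move=> us; rewrite -big_filter.
case hin: ([::] \in s).
  by rewrite (filter_pred1_uniq us hin) big_seq1 /f expr0.
have -> : [seq x <- s | x == [::]] = [::].
  have : ~~ has (pred1 [::]) s by rewrite has_pred1 hin.
  by rewrite has_filter negbK => /eqP.
by rewrite big_nil ler01.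
Qed.

Lemma kraft_hd (b : bool) (L : nat) (s : seq (seq bool)) :
  (forall s, uniq s -> all (fun m => size m <= L)%N s -> \sum_(m <- s) f m <= 2) ->
  uniq s -> all (fun m => size m <= L.+1)%N s ->
  \sum_(m <- s | if m is c :: _ then c == b else false) f m <= 2%:R^-1.
Proof.
move=> IH us al; rewrite -big_filter.
set s' := filter _ s.
have e : \sum_(m <- s') f m = 4%:R^-1 * \sum_(t <- map behead s') f t.
  rewrite big_map mulr_sumr; apply: eq_big_seq => m.
  rewrite mem_filter; case: m => [|c t] //= _.
  by rewrite /f /= exprS.
rewrite e.
have h2 : \sum_(t <- map behead s') f t <= 2.
  apply: IH.
    rewrite map_inj_in_uniq ?filter_uniq //.
    move=> m1 m2; rewrite !mem_filter.
    case: m1 => [|c1 t1] //=; case: m2 => [|c2 t2] //=.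
    by move=> /andP[/eqP -> _] /andP[/eqP -> _] ->.
  apply/allP => t /mapP[m]; rewrite mem_filter => /andP[_ /(allP al)].
  by case: m => [|c u] //= hs ->.
have h4 : (0:R) < 4%:R^-1 by rewrite invr_gt0 ltr0n.
have := ler_wpM2l (ltW h4) h2.
rewrite (_ : 4%:R^-1 * 2 = 2%:R^-1 :> R) //.
by rewrite -[4%N]/(2 * 2)%N natrM invfM -mulrA mulVf ?mulr1 ?pnatr_eq0.
Qed.

Lemma kraft_decomp (s : seq (seq bool)) :
  \sum_(m <- s) f m = \sum_(m <- s | m == [::]) f m
    + \sum_(m <- s | if m is c :: _ then c == false else false) f m
    + \sum_(m <- s | if m is c :: _ then c == true else false) f m.
Proof.
rewrite (big_mkcond (fun m => m == [::])) (big_mkcond (fun m => if m is c :: _ then c == false else false)).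
rewrite (big_mkcond (fun m => if m is c :: _ then c == true else false)) -!big_split.
by apply: eq_bigr => -[|[] t] _ /=; rewrite ?addr0 ?add0r.
Qed.

Lemma kraft_aux (L : nat) (s : seq (seq bool)) :
  uniq s -> all (fun m => size m <= L)%N s ->
  \sum_(m <- s) f m <= 2.
Proof.
elim: L s => [|L IH] s us al.
  rewrite kraft_decomp.
  rewrite [X in _ + X + _]big1_seq; last first.
    by move=> m /andP[]; case: m => // c t _ /(allP al).
  rewrite [X in _ + X]big1_seq; last first.
    by move=> m /andP[]; case: m => // c t _ /(allP al).
  have := kraft_nil s us; lra.
rewrite kraft_decomp.
have := kraft_nil s us.
have := @kraft_hd false L s IH us al.
have := @kraft_hd true L s IH us al.
have h : (2%:R^-1 : R) = 1/2 by rewrite div1r.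
rewrite h; lra.
Qed.

Lemma kraft (s : seq (seq bool)) : uniq s ->
  \sum_(m <- s) (4%:R^-1 : R) ^+ size m <= 2.
Proof.
move=> us; apply: (@kraft_aux (\max_(m <- s) size m)) => //.
by apply/allP => m ms; by apply: leq_bigmax_seq.
Qed.

Lemma sum_option (F : option bool -> R) :
  \sum_(o : option bool) F o = F None + F (Some false) + F (Some true).
Proof.
rewrite (bigD1 None) //= (bigD1 (Some false)) //= (bigD1 (Some true)) //=.
rewrite big_pred0 ?addr0 ?addrA //; by case => [[]|].
Qed.

Lemma sum_fiber (T : finType) (U : eqType) (g : T -> U) (G : T -> R) :
  \sum_x G x = \sum_(m <- undup (map g (enum T))) \sum_(x | g x == m) G x.
Proof.
symmetry; under eq_bigr do rewrite big_mkcond /=.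
rewrite exchange_big /=; apply: eq_bigr => x _.
rewrite -big_mkcond -big_filter.
have hx : g x \in undup (map g (enum T)) by rewrite mem_undup map_f ?mem_enum.
rewrite (eq_filter (a2 := pred1 (g x))); last by move=> m; rewrite /= eq_sym.
by rewrite filter_pred1_uniq ?undup_uniq // big_seq1.
Qed.

Lemma sum_pred_le (T : finType) (P : pred T) (F : T -> R) :
  (forall x, 0 <= F x) -> \sum_(x | P x) F x <= \sum_x F x.
Proof.
move=> F0; rewrite big_mkcond; apply: ler_sum => x _.
by case: (P x).
Qed.

End Gen.

Section Proto.
Variable R : realType.
Variable n : nat.
Variable a : inA n -> seq bool.
Variable B : seq bool -> inB n -> 'I_n -> bool.

Definition ind (o : option bool) (c : bool) : R := if o is Some g then (g == c)%:R else 1.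
Definition consw (x : inA n) (b : inB n) : R := \prod_j ind (x j) (b j).
Definition Qt (z zh : bool) : R :=
  if z then (if zh then 2^-1 else 4^-1) else (if zh then 2^-1 else 3/4).
Definition Qx (m : seq bool) (b : inB n) (x : inA n) : R :=
  \prod_i Qt (x i != None) (B m b i == b i).
Definition qq (b : inB n) (x : inA n) : R :=
  2^-1 * 4^-1 ^+ size (a x) * Qx (a x) b x.

Lemma ind_ge0 o c : 0 <= ind o c.
Proof. by case: o => //= g; rewrite ler0n. Qed.

Lemma consw_ge0 x b : 0 <= consw x b.
Proof. by apply: prodr_ge0 => j _; apply: ind_ge0. Qed.

Lemma Qt_gt0 z zh : 0 < Qt z zh.
Proof. by case: z; case: zh => /=; rewrite ?invr_gt0 ?divr_gt0 ?ltr0n. Qed.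

Lemma Qx_gt0 m b x : 0 < Qx m b x.
Proof. by apply: prodr_gt0 => j _; apply: Qt_gt0. Qed.

Lemma qq_gt0 b x : 0 < qq b x.
Proof.
rewrite /qq !mulr_gt0 ?Qx_gt0 ?exprn_gt0 ?invr_gt0 ?ltr0n //.
Qed.

Lemma sum_consw b : \sum_x consw x b = 2 ^+ n.
Proof.
rewrite /consw (@sum_ffun_prod R _ _ (fun j o => ind o (b j))).
rewrite (eq_bigr (fun _ => 2)); last first.
  by move=> j _; rewrite sum_option /=; case: (b j) => /=; lra.
by rewrite prodr_const card_ord.
Qed.

Lemma sum_conswQ m b : \sum_x consw x b * Qx m b x = 1.
Proof.
rewrite /consw /Qx.
under eq_bigr do rewrite -big_split /=.
rewrite (@sum_ffun_prod R _ _ (fun j o => ind o (b j) * Qt (o != None) (B m b j == b j))).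
rewrite big1 // => j _; rewrite sum_option /=.
case: (b j); case: (B m b j == _) => /=; lra.
Qed.

Lemma sum_conswq b : \sum_x consw x b * qq b x <= 1.
Proof.
rewrite (@sum_fiber R _ _ a).
set s := undup _.
have e : forall m, \sum_(x | a x == m) consw x b * qq b x
   = (2^-1 * 4^-1 ^+ size m) * \sum_(x | a x == m) consw x b * Qx m b x.
  move=> m; rewrite mulr_sumr; apply: eq_bigr => x /eqP am.
  by rewrite /qq am; lra.
under eq_bigr do rewrite e.
have h : forall m, (2^-1 * 4^-1 ^+ size m) * \sum_(x | a x == m) consw x b * Qx m b x
   <= 2^-1 * (4^-1 ^+ size m).
  move=> m; rewrite -mulrA ler_pM2l ?invr_gt0 ?ltr0n //.
  rewrite -[X in _ <= X]mulr1 ler_wpM2l ?exprn_ge0 ?invr_ge0 ?ler0n //.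
  rewrite -(sum_conswQ m b); apply: sum_pred_le => x.
  by rewrite mulr_ge0 ?consw_ge0 ?ltW ?Qx_gt0.
apply: le_trans (ler_sum _ (fun m _ => h m)) _.
rewrite -mulr_sumr.
have := @kraft R s (undup_uniq _).
move=> k; have k2 := ler_wpM2l (x := 2^-1) _ k.
apply: le_trans (k2 _) _; first by rewrite invr_ge0 ler0n.
lra.
Qed.

Lemma step1 b : 2 ^+ n * ln (2 ^+ n : R) <= \sum_x consw x b * (- ln (qq b x)).
Proof.
apply: gibbs.
- by move=> x; apply: consw_ge0.
- by move=> x; apply: qq_gt0.
- exact: sum_consw.
- by rewrite exprn_gt0 ?ltr0n.
- exact: sum_conswq.
Qed.

Definition flipb (i : 'I_n) (b : inB n) : inB n :=
  [ffun j => if j == i then ~~ b j else b j].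

Lemma flipbK i : involutive (flipb i).
Proof.
move=> b; apply/ffunP => j; rewrite !ffunE.
by case: (j == i) => //; rewrite negbK.
Qed.

Lemma sum_flip i (G : inB n -> R) : \sum_(b : inB n) G b = \sum_(b : inB n) G (flipb i b).
Proof. by rewrite (reindex_inj (inv_inj (flipbK i))). Qed.

Lemma flipb_ne i b j : j != i -> flipb i b j = b j.
Proof. by rewrite ffunE => /negbTE ->. Qed.

Lemma flipb_eq i b : flipb i b i = ~~ b i.
Proof. by rewrite ffunE eqxx. Qed.

Lemma prod_half (i : 'I_n) (F : 'I_n -> R) :
  \prod_(j | j != i) (2^-1 * F j) = 2^-1 ^+ n.-1 * \prod_(j | j != i) F j.
Proof.
rewrite big_split /=; congr (_ * _).
have := prodr_const (predC1 i) (2^-1 : R).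
by rewrite cardC1 card_ord.
Qed.

Lemma D_eq (i : 'I_n) b x :
  D_overwrite R i b x = n%:R^-1 * (2 ^+ n)^-1 * (if x i is Some _ then 1/4 else 1/2)
     * 2^-1 ^+ n.-1 * \prod_(j | j != i) ind (x j) (b j).
Proof.
rewrite /D_overwrite natrX -!mulrA; congr (_ * (_ * (_ * _))).
rewrite -prod_half; apply: eq_bigr => j _.
case: (x j) => [c|] /=; last by lra.
by case: (c == b j) => /=; lra.
Qed.

Lemma sum_ind_flip (i : 'I_n) (o : option bool) (G : inB n -> R) :
  (forall b, G (flipb i b) = G b) ->
  \sum_(b : inB n) ind o (b i) * G b = 2^-1 * (ind o false + ind o true) * \sum_(b : inB n) G b.
Proof.
move=> Gf.
have e : \sum_(b : inB n) ind o (b i) * G b = \sum_(b : inB n) ind o (~~ b i) * G b.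
  by rewrite (sum_flip i); apply: eq_bigr => b _; rewrite flipb_eq Gf.
have e2 : \sum_(b : inB n) ind o (b i) * G b + \sum_(b : inB n) ind o (~~ b i) * G b
   = (ind o false + ind o true) * \sum_(b : inB n) G b.
  rewrite -big_split mulr_sumr; apply: eq_bigr => b _.
  by rewrite mulrDl; case: (b i) => //=; rewrite addrC.
rewrite -mulrA -e2 -e; lra.
Qed.

Lemma D_consw (i : 'I_n) x (H : inB n -> R) :
  (forall b, H (flipb i b) = H b) ->
  \sum_(b : inB n) D_overwrite R i b x * H b
    = n%:R^-1 * (2 ^+ n)^-1 * (2 ^+ n)^-1 * \sum_(b : inB n) consw x b * H b.
Proof.
move=> Hf.
set G := fun b : inB n => (\prod_(j | j != i) ind (x j) (b j)) * H b.
have Gf : forall b, G (flipb i b) = G b.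
  move=> b; rewrite /G Hf; congr (_ * _); apply: eq_bigr => j ji.
  by rewrite flipb_ne.
have e1 : \sum_(b : inB n) consw x b * H b = \sum_(b : inB n) ind (x i) (b i) * G b.
  by apply: eq_bigr => b _; rewrite /consw (bigD1 i) //= /G mulrA.
rewrite e1 (sum_ind_flip i (x i) G Gf).
set K := n%:R^-1 * (2 ^+ n)^-1 * (if x i is Some _ then 1/4 else 1/2) * (2^-1 ^+ n.-1 : R).
rewrite (eq_bigr (fun b => K * G b)); last by move=> b _; rewrite D_eq /G /K !mulrA.
rewrite -mulr_sumr /K.
have n0 : (0 < n)%N := leq_ltn_trans (leq0n i) (ltn_ord i).
have -> : (2 ^+ n)^-1 = 2^-1 * (2^-1 ^+ n.-1 : R).
  by rewrite -exprVn -exprS prednK.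
by case: (x i) => [[]|] /=; field; rewrite pnatr_eq0 -lt0n.
Qed.

Lemma ln_prod (I : Type) (r : seq I) (P : pred I) (F : I -> R) :
  (forall i, 0 < F i) -> ln (\prod_(i <- r | P i) F i) = \sum_(i <- r | P i) ln (F i).
Proof.
move=> F0.
suff : \sum_(i <- r | P i) ln (F i) = ln (\prod_(i <- r | P i) F i) /\ 0 < \prod_(i <- r | P i) F i.
  by case=> ->.
apply: (big_rec2 (fun s p => s = ln p /\ 0 < p)); first by rewrite ln1 ltr01.
move=> i s p _ [-> p0]; split; last by rewrite mulr_gt0.
by rewrite lnM ?posrE.
Qed.

Definition LQ z zh := - ln (Qt z zh).

Lemma ln2V : ln (2^-1 : R) = - ln 2.
Proof. by rewrite lnV ?posrE ?ltr0n. Qed.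

Lemma ln4V : ln (4^-1 : R) = - (ln 2 + ln 2).
Proof.
rewrite lnV ?posrE ?ltr0n // -lnM ?posrE ?ltr0n //.
by rewrite (_ : (2 * 2 : R) = 4) //; lra.
Qed.

Lemma ln34 : ln (3/4 : R) = - ln (4/3).
Proof.
rewrite -lnV ?posrE ?divr_gt0 ?ltr0n //; congr ln.
by rewrite invf_div.
Qed.

Lemma lnqq b x : - ln (qq b x) =
  ln 2 + (size (a x))%:R * (2 * ln 2) + \sum_i LQ (x i != None) (B (a x) b i == b i).
Proof.
rewrite /qq !lnM ?posrE ?mulr_gt0 ?invr_gt0 ?ltr0n ?exprn_gt0 ?Qx_gt0 //.
rewrite lnXn ?invr_gt0 ?ltr0n // ln2V ln4V /Qx ln_prod; last by move=> i; apply: Qt_gt0.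
rewrite /LQ sumrN -[_ *+ size (a x)]mulr_natr; first ring.
all: by rewrite invr_gt0 ltr0n.
Qed.

Lemma sum_consw_sel b (i : 'I_n) (P : option bool -> bool) :
  \sum_x consw x b * (P (x i))%:R = (\sum_o ind o (b i) * (P o)%:R) * 2 ^+ n.-1.
Proof.
have e : forall x : inA n, consw x b * (P (x i))%:R
    = \prod_j (ind (x j) (b j) * (if j == i then (P (x j))%:R else 1)).
  move=> x; rewrite big_split /=; congr (_ * _).
  by rewrite -big_mkcond /= big_pred1_eq.
rewrite (eq_bigr _ (fun x _ => e x)).
rewrite (@sum_ffun_prod R _ _ (fun j o => ind o (b j) * (if j == i then (P o)%:R else 1))).
rewrite (bigD1 i) //= eqxx; congr (_ * _).
rewrite (eq_bigr (fun _ => 2)); last first.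
  move=> j /negbTE ->; rewrite sum_option /=; case: (b j) => /=; lra.
have := prodr_const (predC1 i) (2 : R).
by rewrite cardC1 card_ord.
Qed.

Definition Herr (i : 'I_n) (x : inA n) (b : inB n) : R :=
  if ow_correct i x (B (a x) b i) then 0 else 1.

Lemma Herr_consw i x b :
  consw x b * Herr i x b = consw x b * ((x i != None) && ~~ (B (a x) b i == b i))%:R.
Proof.
rewrite /consw (bigD1 i) //= /Herr /ow_correct.
case: (x i) => [v|] /=; last by rewrite !mulr0.
case: (boolP (v == b i)) => [/eqP <-|vb] /=; first by case: (B _ _ _ == v).
by rewrite !mul0r.
Qed.

Section Inv.
Hypothesis HB : forall m b i, B m (flipb i b) i = B m b i.

Lemma zh_flip x b i : (B (a x) (flipb i b) i == flipb i b i) = ~~ (B (a x) b i == b i).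
Proof. by rewrite HB flipb_eq; case: (B _ _ _); case: (b i). Qed.

Lemma Tix (i : 'I_n) x :
  \sum_(b : inB n) consw x b * LQ (x i != None) (B (a x) b i == b i)
  = (if x i is None then 2^-1 * (ln 2 + ln (4/3)) else ln 2) * \sum_(b : inB n) consw x b
    + ln 2 * \sum_(b : inB n) consw x b * ((x i != None) && ~~ (B (a x) b i == b i))%:R.
Proof.
case hx: (x i) => [v|] /=.
  rewrite !mulr_sumr -big_split /=; apply: eq_bigr => b _.
  rewrite /LQ /Qt; case: (B _ _ _ == _) => /=; rewrite ?ln2V ?ln4V; lra.
rewrite [X in ln 2 * X]big1 ?mulr0 ?addr0; last by move=> b _; rewrite mulr0.
have cf : forall b, consw x (flipb i b) = consw x b.
  move=> b; rewrite /consw; apply: eq_bigr => j _.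
  case: (eqVneq j i) => [->|ji]; first by rewrite hx.
  by rewrite flipb_ne.
set S := \sum_(b : inB n) _.
have e : S = \sum_(b : inB n) consw x b * LQ false (~~ (B (a x) b i == b i)).
  by rewrite /S (sum_flip i); apply: eq_bigr => b _; rewrite cf zh_flip.
have e2 : S + S = (ln 2 + ln (4/3)) * \sum_(b : inB n) consw x b.
  rewrite {1}e /S -big_split mulr_sumr; apply: eq_bigr => b _ /=.
  rewrite /LQ /Qt; case: (B _ _ _ == _) => /=; rewrite ?ln2V ?ln34; lra.
rewrite -mulrA -e2; lra.
Qed.

Definition costP : R :=
  \sum_(i : 'I_n) \sum_(b : inB n) \sum_(x : inA n) D_overwrite R i b x * (size (a x))%:R.
Definition errP : R :=
  \sum_(i : 'I_n) \sum_(b : inB n) \sum_(x : inA n) D_overwrite R i b x * Herr i x b.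

Lemma L_cost (n0 : (0 < n)%N) :
  \sum_(x : inA n) \sum_(b : inB n) consw x b * (size (a x))%:R = 2 ^+ n * 2 ^+ n * costP.
Proof.
rewrite /costP.
set S := \sum_(x : inA n) _.
have e : forall i : 'I_n, \sum_(b : inB n) \sum_(x : inA n) D_overwrite R i b x * (size (a x))%:R
   = n%:R^-1 * (2 ^+ n)^-1 * (2 ^+ n)^-1 * S.
  move=> i; rewrite exchange_big /= /S mulr_sumr; apply: eq_bigr => x _.
  by rewrite (D_consw i x (fun _ => (size (a x))%:R)).
rewrite (eq_bigr _ (fun i _ => e i)).
rewrite sumr_const card_ord -mulr_natr.
have nz : (n%:R : R) != 0 by rewrite pnatr_eq0 -lt0n.
have tz : (2 ^+ n : R) != 0 by rewrite expf_neq0 // pnatr_eq0.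
by field; rewrite mul1r tz nz.
Qed.

Lemma L_err (n0 : (0 < n)%N) :
  \sum_(i : 'I_n) \sum_(x : inA n) \sum_(b : inB n)
     consw x b * ((x i != None) && ~~ (B (a x) b i == b i))%:R
  = n%:R * 2 ^+ n * 2 ^+ n * errP.
Proof.
rewrite /errP mulr_sumr; apply: eq_bigr => i _.
rewrite [X in _ = _ * X]exchange_big /= mulr_sumr; apply: eq_bigr => x _.
rewrite (D_consw i x (Herr i x)); last by move=> b; rewrite /Herr HB.
rewrite (eq_bigr (fun b => consw x b * Herr i x b)); last by move=> b _; rewrite Herr_consw.
set S := \sum_(b : inB n) _.
have nz : (n%:R : R) != 0 by rewrite pnatr_eq0 -lt0n.
have tz : (2 ^+ n : R) != 0 by rewrite expf_neq0 // pnatr_eq0.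
by field; rewrite ?mul1r ?tz ?nz.
Qed.

Lemma card_inB : #|{: inB n}| = (2 ^ n)%N.
Proof. by rewrite card_ffun card_bool card_ord. Qed.

Lemma L_coef (n0 : (0 < n)%N) (i : 'I_n) (al be : R) :
  \sum_(x : inA n) (if x i is None then al else be) * \sum_(b : inB n) consw x b
  = 2 ^+ n * 2 ^+ n * ((al + be) / 2).
Proof.
have e : forall x : inA n, (if x i is None then al else be) * \sum_(b : inB n) consw x b
   = \sum_(b : inB n) (al * (consw x b * (x i == None)%:R) + be * (consw x b * (x i != None)%:R)).
  move=> x; rewrite mulr_sumr; apply: eq_bigr => b _.
  by case: (x i) => [v|] /=; rewrite ?mulr0 ?mulr1 ?addr0 ?add0r mulrC.
rewrite (eq_bigr _ (fun x _ => e x)) exchange_big /=.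
under eq_bigr => b _ do rewrite big_split /= -!mulr_sumr (sum_consw_sel b i (fun o => o == None)) (sum_consw_sel b i (fun o => o != None)) !sum_option /=.
have h : forall c : bool, ind None c * 1 + ind (Some false) c * 0 + ind (Some true) c * 0 = 1.
  by case => /=; lra.
have h2 : forall c : bool, ind None c * 0 + ind (Some false) c * 1 + ind (Some true) c * 1 = 1.
  by case => /=; lra.
under eq_bigr do rewrite h h2.
rewrite sumr_const card_inB -[_ *+ (2 ^ n)]mulr_natr natrX.
have -> : (2 ^+ n : R) = 2 * 2 ^+ n.-1 by rewrite -exprS prednK.
by field.
Qed.

Lemma proto_bound (n0 : (0 < n)%N) :
  n%:R * ln 2 <= (2 * costP + 1) * ln 2 + n%:R * ((3 * ln 2 + ln (4/3)) / 4)
     + n%:R * ln 2 * errP.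
Proof.
set N : R := 2 ^+ n.
have N0 : 0 < N by rewrite exprn_gt0 ?ltr0n.
have h1 : \sum_(b : inB n) (N * ln N) <= \sum_(b : inB n) \sum_x consw x b * (- ln (qq b x)).
  by apply: ler_sum => b _; apply: step1.
rewrite sumr_const card_inB -[_ *+ (2 ^ n)]mulr_natr natrX -/N lnXn ?ltr0n // in h1.
have e1 : forall b x, consw x b * (- ln (qq b x))
   = ln 2 * consw x b + (2 * ln 2) * (consw x b * (size (a x))%:R)
     + \sum_i consw x b * LQ (x i != None) (B (a x) b i == b i).
  move=> b x; rewrite lnqq -mulr_sumr; ring.
have e2 : \sum_(b : inB n) \sum_x consw x b * (- ln (qq b x))
   = ln 2 * (N * N) + (2 * ln 2) * (N * N * costP)
     + \sum_i \sum_(x : inA n) \sum_(b : inB n) consw x b * LQ (x i != None) (B (a x) b i == b i).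
  rewrite (eq_bigr (fun b => \sum_x (ln 2 * consw x b + (2 * ln 2) * (consw x b * (size (a x))%:R)
     + \sum_i consw x b * LQ (x i != None) (B (a x) b i == b i)))); last first.
    by move=> b _; apply: eq_bigr => x _; exact: e1.
  have t1 : \sum_(b : inB n) \sum_x ln 2 * consw x b = ln 2 * (N * N).
    under eq_bigr do rewrite -mulr_sumr sum_consw.
    by rewrite -mulr_sumr sumr_const card_inB -[_ *+ (2 ^ n)]mulr_natr natrX -/N mulrC.
  have t2 : \sum_(b : inB n) \sum_x (2 * ln 2) * (consw x b * (size (a x))%:R)
      = (2 * ln 2) * (N * N * costP).
    under eq_bigr do rewrite -mulr_sumr.
    by rewrite -mulr_sumr exchange_big /= (L_cost n0).
  have t3 : \sum_(b : inB n) \sum_x \sum_i consw x b * LQ (x i != None) (B (a x) b i == b i)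
      = \sum_i \sum_(x : inA n) \sum_(b : inB n) consw x b * LQ (x i != None) (B (a x) b i == b i).
    rewrite exchange_big /=.
    under eq_bigr do rewrite exchange_big /=.
    by rewrite exchange_big.
  under eq_bigr do rewrite !big_split /=.
  by rewrite !big_split /= t1 t2 t3.
have e3 : \sum_i \sum_(x : inA n) \sum_(b : inB n) consw x b * LQ (x i != None) (B (a x) b i == b i)
   = n%:R * (N * N * ((2^-1 * (ln 2 + ln (4/3)) + ln 2) / 2)) + ln 2 * (n%:R * N * N * errP).
  set C := N * N * _.
  rewrite (eq_bigr (fun i => C + ln 2 * \sum_(x : inA n) \sum_(b : inB n)
     consw x b * ((x i != None) && ~~ (B (a x) b i == b i))%:R)); last first.
    move=> i _; under eq_bigr => x _ do rewrite (Tix i x).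
    by rewrite big_split /= (L_coef n0) -mulr_sumr.
  by rewrite big_split /= sumr_const card_ord -mulr_sumr (L_err n0) -[C *+ n]mulr_natl.
rewrite e2 e3 in h1.
rewrite -(ler_pM2l (mulr_gt0 N0 N0)).
move: h1; rewrite -[ln 2 *+ n]mulr_natl => h1.
have -> : N * N * (n%:R * ln 2) = N * (n%:R * ln 2) * N by ring.
apply: (le_trans h1); rewrite le_eqVlt; by apply/orP; left; apply/eqP; field.
Qed.

End Inv.

End Proto.

Arguments flipb {n} i b.
Arguments sum_flip {R n} i G.
Arguments flipb_ne {n} i b j _.

Section Red.
Variable R : realType.
Variable n : nat.
Variable a : inA n -> seq bool.
Variable B : seq bool -> inB n -> 'I_n -> bool.

Definition setb (b : inB n) (i : 'I_n) (c : bool) : inB n :=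
  [ffun j => if j == i then c else b j].

Definition errc (i : 'I_n) (c : bool) : R :=
  \sum_(b : inB n) \sum_(x : inA n) D_overwrite R i b x *
     (if ow_correct i x (B (a x) (setb b i c) i) then 0 else 1).

Definition erri (i : 'I_n) : R :=
  \sum_(b : inB n) \sum_(x : inA n) D_overwrite R i b x *
     (if ow_correct i x (B (a x) b i) then 0 else 1).

Lemma D_flip (i : 'I_n) b x : D_overwrite R i (flipb i b) x = D_overwrite R i b x.
Proof.
rewrite !D_eq; congr (_ * _); apply: eq_bigr => j ji.
by rewrite flipb_ne.
Qed.

Lemma errc_sum i : errc i false + errc i true = 2 * erri i.
Proof.
rewrite /errc /erri -big_split /=.
have -> : 2 * (\sum_(b : inB n) \sum_(x : inA n) D_overwrite R i b x *
     (if ow_correct i x (B (a x) b i) then 0 else 1))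
   = \sum_(b : inB n) \sum_(x : inA n) D_overwrite R i b x *
     (if ow_correct i x (B (a x) b i) then 0 else 1)
   + \sum_(b : inB n) \sum_(x : inA n) D_overwrite R i (flipb i b) x *
     (if ow_correct i x (B (a x) (flipb i b) i) then 0 else 1).
  by rewrite -(sum_flip i (fun b : inB n => \sum_(x : inA n) D_overwrite R i b x *
     (if ow_correct i x (B (a x) b i) then 0 else 1))); lra.
rewrite -big_split /=; apply: eq_bigr => b _.
rewrite -!big_split /=; apply: eq_bigr => x _.
rewrite D_flip -!mulrDr; congr (_ * _).
have s0 : setb b i (b i) = b.
  by apply/ffunP => j; rewrite ffunE; case: eqP => // ->.
have s1 : setb b i (~~ b i) = flipb i b.
  by apply/ffunP => j; rewrite !ffunE; case: eqP => // ->.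
case hb: (b i); rewrite hb /= in s0 s1.
  by rewrite s0 s1 addrC.
by rewrite s0 s1.
Qed.

Definition cc (i : 'I_n) : bool := errc i true <= errc i false.

Definition Bred (m : seq bool) (b : inB n) (i : 'I_n) : bool := B m (setb b i (cc i)) i.

Lemma Bred_flip m b i : Bred m (flipb i b) i = Bred m b i.
Proof.
rewrite /Bred; congr (B _ _ _); apply/ffunP => j; rewrite !ffunE.
by case: eqP => // ->.
Qed.

Lemma errc_le i : errc i (cc i) <= erri i.
Proof.
have := errc_sum i; rewrite /cc.
case: (boolP (errc i true <= errc i false)) => h e; lra.
Qed.

Lemma errP_red : errP R n a Bred <= errP R n a B.
Proof.
apply: ler_sum => i _; rewrite /Herr /Bred.
exact: errc_le.
Qed.

End Red.

Lemma cost_split (R : realType) (n : nat) (Rnd : finType) (rho : Rnd -> R)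
  (alice : Rnd -> inA n -> seq bool) :
  ow_cost rho alice = \sum_r rho r * costP R n (alice r).
Proof.
apply: eq_bigr => r _; rewrite /costP mulr_sumr; apply: eq_bigr => i _.
rewrite mulr_sumr; apply: eq_bigr => b _.
rewrite mulr_sumr; apply: eq_bigr => x _.
by rewrite mulrA.
Qed.

Lemma err_split (R : realType) (n : nat) (Rnd : finType) (rho : Rnd -> R)
  (alice : Rnd -> inA n -> seq bool) (bob : Rnd -> seq bool -> inB n -> 'I_n -> bool) :
  ow_error rho alice bob = \sum_r rho r * errP R n (alice r) (bob r).
Proof.
apply: eq_bigr => r _; rewrite /errP mulr_sumr; apply: eq_bigr => i _.
rewrite mulr_sumr; apply: eq_bigr => b _.
rewrite mulr_sumr; apply: eq_bigr => x _.
by rewrite mulrA.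
Qed.

Lemma ln43_lt (R : realType) : ln (4/3 : R) * 5 < ln 2 * 3.
Proof.
rewrite !mulr_natr -!lnXn ?divr_gt0 ?ltr0n //.
rewrite ltr_ln ?posrE ?exprn_gt0 ?divr_gt0 ?ltr0n //.
rewrite expr_div_n; rewrite ltr_pdivrMr ?exprn_gt0 ?ltr0n //.
by rewrite -!natrX -natrM ltr_nat.
Qed.

Theorem mainTheorem17 (R : realType) (delta : R) :
  0 < delta -> delta < 1 / 10 ->
  exists c : R, 0 < c /\
  exists N : nat, forall n : nat, (N <= n)%N ->
  forall (Rnd : finType) (rho : Rnd -> R),
    (forall r, 0 <= rho r) -> \sum_(r : Rnd) rho r = 1 ->
  forall (alice : Rnd -> inA n -> seq bool)
         (bob : Rnd -> seq bool -> inB n -> 'I_n -> bool),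
    ow_error rho alice bob <= delta ->
    c * n%:R <= ow_cost rho alice.
Proof.
move=> d0 d1.
set l2 := ln (2 : R); set l43 := ln (4/3 : R).
have l2p : 0 < l2 by rewrite /l2 ln_gt0 // ltr1n.
have hl := ln43_lt R; rewrite -/l2 -/l43 in hl.
set g := l2 * (4^-1 - delta) - l43 / 4.
have gp : 0 < g.
  have : l2 * (4^-1 - delta) > l2 * (3/20).
    by rewrite ltr_pM2l //; lra.
  rewrite /g; lra.
exists (g / (4 * l2)); split; first by rewrite divr_gt0 // mulr_gt0 // ltr0n.
exists (Num.Def.trunc (2 * l2 / g)).+1 => n Nn Rnd rho rho0 rho1 alice bob herr.
have n0 : (0 < n)%N by apply: leq_trans Nn.
have nbig : 2 * l2 / g < n%:R.
  apply: lt_le_trans (truncnS_gt _) _; by rewrite ler_nat.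
have per : forall r, n%:R * l2 <= (2 * costP R n (alice r) + 1) * l2
     + n%:R * ((3 * l2 + l43) / 4) + n%:R * l2 * errP R n (alice r) (bob r).
  move=> r.
  apply: le_trans (@proto_bound R n (alice r) (Bred R n (alice r) (bob r)) (Bred_flip R n (alice r) (bob r)) n0) _.
  rewrite lerD2l; apply: ler_wpM2l; first by rewrite mulr_ge0 ?ler0n ?ltW.
  exact: errP_red.
have tot : \sum_r rho r * (n%:R * l2) <= \sum_r rho r * ((2 * costP R n (alice r) + 1) * l2
     + n%:R * ((3 * l2 + l43) / 4) + n%:R * l2 * errP R n (alice r) (bob r)).
  by apply: ler_sum => r _; apply: ler_wpM2l.
rewrite -mulr_suml rho1 mul1r in tot.
set K := (3 * l2 + l43) / 4.
have eqX : \sum_r rho r * ((2 * costP R n (alice r) + 1) * l2 + n%:R * K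
      + n%:R * l2 * errP R n (alice r) (bob r))
    = 2 * l2 * (\sum_r rho r * costP R n (alice r)) + l2 * (\sum_r rho r)
      + n%:R * K * (\sum_r rho r) + n%:R * l2 * (\sum_r rho r * errP R n (alice r) (bob r)).
  rewrite !mulr_sumr -!big_split /=; apply: eq_bigr => r _; ring.
rewrite eqX rho1 -cost_split -err_split in tot.
have h2 : n%:R * l2 * ow_error rho alice bob <= n%:R * l2 * delta.
  by apply: ler_wpM2l => //; rewrite mulr_ge0 ?ler0n ?ltW.
have key : n%:R * g <= 2 * l2 * ow_cost rho alice + l2.
  rewrite /g /K in tot h2 *.
  move: tot h2; set e := ow_error _ _ _; set nn := (n%:R : R).
  move=> tot h2.
  have -> : nn * (l2 * (4^-1 - delta) - l43 / 4) = nn * l2 - nn * ((3 * l2 + l43) / 4) - nn * l2 * delta by field.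
  move: tot h2; rewrite !mulr1.
  set A := nn * l2; set Kt := nn * ((3 * l2 + l43) / 4); set Ee := nn * l2 * e; set Ed := nn * l2 * delta.
  set Cc := 2 * l2 * _.
  lra.
have h3 : 2 * l2 <= n%:R * g.
  by rewrite ltr_pdivrMr // in nbig; apply: ltW.
rewrite -mulrA in key.
have h4 : n%:R * g <= 4 * (l2 * ow_cost rho alice).
  move: key h3; set X := n%:R * g; set Z := l2 * _; lra.
have -> : g / (4 * l2) * n%:R = (n%:R * g) / (4 * l2) by rewrite mulrC mulrA.
rewrite ler_pdivrMr ?mulr_gt0 ?ltr0n //.
by rewrite (mulrC _ (4 * l2)) -mulrA.
Qed.
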